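(* For any $\mathrm{LP}^{\mathrm{MLN}}$ program $\Pi$, the map \[ \phi(I)=I\cup\{\mathtt{unsat}(i,w_i,\mathbf c) : w_i:\mathit{Head}_i(\mathbf c)\leftarrow\mathit{Body}_i(\mathbf c)\in Gr(\Pi),\ I\not\models \mathit{Body}_i(\mathbf c)\rightarrow \mathit{Head}_i(\mathbf c)\} \] is a one-to-one correspondence between $\mathrm{SM}[\Pi]$ and the set of stable models of $\mathsf{lpmln2asp^{pnt}}(\Pi)$. Furthermore, for every $I\in\mathrm{SM}[\Pi]$, \[ W^{\rm pnt}_\Pi(I)=\exp\Big(-\sum_{\mathtt{unsat}(i,w_i,\mathbf c)\in\phi(I)} w_i\Big). \] Also, $\phi$ restricts to a one-to-one correspondence between the most probable stable models of $\Pi$ and the optimal stable models of $\mathsf{lpmln2asp^{pnt}}(\Pi)$.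
   Context: An $\mathrm{LP}^{\mathrm{MLN}}$ program is a finite set of weighted rules $w_i:\mathit{Head}_i(\mathbf x)\leftarrow \mathit{Body}_i(\mathbf x)$, indexed by $i$, where $\mathbf x$ is the list of global variables, $\mathit{Head}_i$ is a possibly empty disjunction of atoms $l_1;\dots;l_n$, $\mathit{Body}_i$ a conjunction of literals, and $w_i$ a real number or the symbol $\alpha$ (infinite weight). The Herbrand universe is finite; $Gr(\Pi)$ replaces global variables by all tuples $\mathbf c$. For ground $\Pi$ and interpretation $I$: $\overline{\Pi}$ drops weights, $\Pi_I$ is the set of rules satisfied by $I$, $\mathrm{SM}[\Pi]=\{I: I\text{ stable model of }\overline{\Pi_I}\}$; $W^{\rm pnt}_\Pi(I)=\exp(-\sum_{w:R\in\Pi,\ I\not\models R}w)$ if $I\in\mathrm{SM}[\Pi]$ and $0$ otherwise; $W_\Pi(I)=\exp(\sum_{w:R\in\Pi_I}w)$ if $I\in\mathrm{SM}[\Pi]$, else $0$; $P_\Pi(I)=\lim_{\alpha\to\infty}W_\Pi(I)/\sum_{J\in\mathrm{SM}[\Pi]}W_\Pi(J)$; most probable stable models maximize $P_\Pi$. Weak constraints: $:\sim F\ [\mathit{Weight}@\mathit{Level}]$ with $F$ a conjunction of literals, real weight, nonnegative integer level (optionally with a tuple of terms distinguishing instances). For $\Pi_1\cup\Pi_2$ ($\Pi_1$ without weak constraints, $\Pi_2$ ground weak constraints), stable models are those of $\Pi_1$; the penalty of $I$ at level $l$ is $\sum_{:\sim F[w@l]\in\Pi_2,\ I\models F}w$;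 $I$ is dominated by $I'$ if at some level $l$ the penalty of $I'$ is strictly smaller and they agree at all levels $k>l$; optimal stable models are those not dominated. $\mathsf{lpmln2asp^{pnt}}(\Pi)$ replaces each rule $w_i:\mathit{Head}_i(\mathbf x)\leftarrow\mathit{Body}_i(\mathbf x)$ by $\mathtt{unsat}(i,w_i,\mathbf x)\leftarrow \mathit{Body}_i(\mathbf x),\ \mathtt{not}\ \mathit{Head}_i(\mathbf x)$; $\mathit{Head}_i(\mathbf x)\leftarrow \mathit{Body}_i(\mathbf x),\ \mathtt{not}\ \mathtt{unsat}(i,w_i,\mathbf x)$; $:\sim \mathtt{unsat}(i,w_i,\mathbf x).\ [w'_i@l, i,\mathbf x]$, where $w'_i=1,\ l=1$ if $w_i=\alpha$ and $w'_i=w_i,\ l=0$ otherwise; $\mathtt{not}\ \mathit{Head}_i$ for $\mathit{Head}_i=l_1;\dots;l_n$ stands for $\mathtt{not}\ l_1,\dots,\mathtt{not}\ l_n$; $\mathtt{unsat}$ is a fresh predicate. In the weight formula hard weights are kept as the symbol $\alpha$. *)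

(* Defs.v *)
From mathcomp Require Import all_boot.
From Stdlib Require Import Reals.

Set Implicit Arguments.
Unset Strict Implicit.
Unset Printing Implicit Defensive.

(* A ground rule  l_1;...;l_n <- p_1,...,p_k, not q_1,...,not q_m.           *)
Record grule (T : Type) := GRule { ghead : seq T; gpos : seq T; gneg : seq T }.

Section GroundSemantics.
Variable T : finType.

Definition sat_body (I : {set T}) (r : grule T) : bool :=
  all (fun a => a \in I) (gpos r) && all (fun a => a \notin I) (gneg r).

Definition sat_rule (I : {set T}) (r : grule T) : bool :=
  sat_body I r ==> has (fun a => a \in I) (ghead r).

Definition is_model (P : seq (grule T)) (I : {set T}) : bool :=
  all (sat_rule I) P.

Definition reduct (P : seq (grule T)) (I : {set T}) : seq (grule T) :=
  [seq GRule (ghead r) (gpos r) [::] | r <- P & all (fun a => a \notin I) (gneg r)].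

Definition stable (P : seq (grule T)) (I : {set T}) : bool :=
  is_model (reduct P I) I &&
  [forall J : {set T}, (J \proper I) ==> ~~ is_model (reduct P I) J].

(* Ground weak constraints  :~ F [w@l]  with F a conjunction of literals. *)
Record wconstr := WC { wpos : seq T; wneg : seq T; wwt : R; wlvl : nat }.

Definition sumR (s : seq R) : R := foldr Rplus 0%R s.

Definition wc_sat (I : {set T}) (c : wconstr) : bool :=
  all (fun a => a \in I) (wpos c) && all (fun a => a \notin I) (wneg c).

Definition penalty (W : seq wconstr) (I : {set T}) (l : nat) : R :=
  sumR [seq wwt c | c <- W & (wlvl c == l) && wc_sat I c].

Definition dominated (W : seq wconstr) (I I' : {set T}) : Prop :=
  exists l : nat, (penalty W I' l < penalty W I l)%R /\
    forall k : nat, (l < k)%N -> penalty W I' k = penalty W I k.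

Definition optimal (P : seq (grule T)) (W : seq wconstr) (I : {set T}) : Prop :=
  stable P I /\ ~ (exists I' : {set T}, stable P I' /\ dominated W I I').

End GroundSemantics.

Inductive weight := Soft of R | Hard.   (* Hard = the symbol alpha *)

Definition wval (a : R) (w : weight) : R :=
  match w with Soft r => r | Hard => a end.

Section LPMLN.
(* C : the (finite) Herbrand universe; Pr : predicate symbols with arities *)
Variables (C Pr : finType) (ar : Pr -> nat).

Definition gatom : finType := {p : Pr & (ar p).-tuple C}.

(* terms / atoms over the k global variables x_0..x_{k-1} of a rule *)
Definition term (k : nat) : Type := ('I_k + C)%type.
Definition atom (k : nat) : Type := {p : Pr & (ar p).-tuple (term k)}.

Record rule := Rule {
  rk : nat;                 (* number of global variables *)
  rw : weight;
  rhead : seq (atom rk);    (* disjunction of atoms (possibly empty) *)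
  rbpos : seq (atom rk);
  rbneg : seq (atom rk)
}.

Definition program := seq rule.

Definition ground_term k (c : k.-tuple C) (t : term k) : C :=
  match t with inl j => tnth c j | inr a => a end.

Definition ground_atom k (c : k.-tuple C) (a : atom k) : gatom :=
  @Tagged Pr (tag a) (fun p => (ar p).-tuple C) (map_tuple (ground_term c) (tagged a)).

Definition ground_rule (r : rule) (c : (rk r).-tuple C) : grule gatom :=
  GRule (map (ground_atom c) (rhead r)) (map (ground_atom c) (rbpos r))
        (map (ground_atom c) (rbneg r)).

Variable Pi : program.

Definition rule_of (i : 'I_(size Pi)) : rule := tnth (in_tuple Pi) i.

(* ground instances (i, c) of Pi: the elements of Gr(Pi) *)
Definition ginst : finType := {i : 'I_(size Pi) & (rk (rule_of i)).-tuple C}.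

Definition ginst_weight (g : ginst) : weight := rw (rule_of (tag g)).
Definition ginst_rule (g : ginst) : grule gatom := ground_rule (tagged g).

Definition Gr : seq (weight * grule gatom) :=
  [seq (ginst_weight g, ginst_rule g) | g <- enum ginst].

Definition SM : {set {set gatom}} :=
  [set I | stable [seq wr.2 | wr <- Gr & sat_rule I wr.2] I].

Definition Wpnt (a : R) (I : {set gatom}) : R :=
  if I \in SM then
    exp (- sumR [seq wval a wr.1 | wr <- Gr & ~~ sat_rule I wr.2])
  else 0%R.

Definition Wstd (a : R) (I : {set gatom}) : R :=
  if I \in SM then exp (sumR [seq wval a wr.1 | wr <- Gr & sat_rule I wr.2])
  else 0%R.

Definition Zstd (a : R) : R := sumR [seq Wstd a J | J <- enum {set gatom} & J \in SM].

Definition lim_infty (f : R -> R) (l : R) : Prop :=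
  forall eps : R, (0 < eps)%R ->
    exists M : R, forall a : R, (M < a)%R -> (Rabs (f a - l) < eps)%R.

Definition prob (I : {set gatom}) (p : R) : Prop :=
  lim_infty (fun a => Wstd a I / Zstd a)%R p.

Definition most_probable (I : {set gatom}) : Prop :=
  I \in SM /\ exists p, prob I p /\
    forall (J : {set gatom}) (q : R), prob J q -> (q <= p)%R.

(* atoms of the translation: original atoms, plus the fresh atoms
   unsat(i, w_i, c), one for each ground instance (i, c) *)
Definition tatom : finType := (gatom + ginst)%type.

Definition tr_inst (g : ginst) : seq (grule tatom) :=
  let r := ginst_rule g in
  [:: (* unsat(i,w_i,c) <- Body_i(c), not Head_i(c) *)
      GRule [:: inr g] (map inl (gpos r)) (map inl (gneg r) ++ map inl (ghead r));
      (* Head_i(c) <- Body_i(c), not unsat(i,w_i,c) *)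
      GRule (map inl (ghead r)) (map inl (gpos r)) (map inl (gneg r) ++ [:: inr g]) ].

Definition tr_rules : seq (grule tatom) := flatten [seq tr_inst g | g <- enum ginst].

(* :~ unsat(i,w_i,c). [w'_i@l, i, c] *)
Definition tr_wc (g : ginst) : wconstr tatom :=
  match ginst_weight g with
  | Hard => WC [:: inr g] [::] 1%R 1
  | Soft w => WC [:: inr g] [::] w 0
  end.

Definition tr_weak : seq (wconstr tatom) := [seq tr_wc g | g <- enum ginst].

Definition phi (I : {set gatom}) : {set tatom} :=
  [set x : tatom | match x with
                   | inl a => a \in I
                   | inr g => ~~ sat_rule I (ginst_rule g)
                   end].

Definition unsat_sum (a : R) (J : {set tatom}) : R :=
  sumR [seq wval a (ginst_weight g) | g <- enum ginst & inr g \in J].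

End LPMLN.

(* Main.v *)
Require Import Defs.
From mathcomp Require Import all_boot.
From Coquelicot Require Import Coquelicot.
From Stdlib Require Import Reals Lra.
From mathcomp Require Import all_boot.

Set Implicit Arguments.
Unset Strict Implicit.
Unset Printing Implicit Defensive.

Section Generic.
Variable T : finType.
Definition bpos (J : {set T}) (r : grule T) := all (fun a => a \in J) (gpos r).
Definition bneg (J : {set T}) (r : grule T) := all (fun a => a \notin J) (gneg r).
Definition hsat (J : {set T}) (r : grule T) := has (fun a => a \in J) (ghead r).

Lemma sat_ruleE I r : sat_rule I r = (bpos I r && bneg I r) ==> hsat I r.
Proof. by []. Qed.

Lemma is_model_reduct (P : seq (grule T)) K J :
  is_model (reduct P K) J = all (fun r => bneg K r ==> (bpos J r ==> hsat J r)) P.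
Proof.
rewrite /is_model /reduct all_map all_filter; apply: eq_all => r /=.
by rewrite /sat_rule /sat_body /= andbT.
Qed.

Lemma bpos_sub (A B : {set T}) r : A \subset B -> bpos A r -> bpos B r.
Proof. by move=> /subsetP sAB /allP H; apply/allP => a /H /sAB. Qed.

Lemma all_enumP (p : pred T) : reflect (forall x, p x) (all p (enum T)).
Proof.
apply: (iffP allP) => H x; first by apply: H; rewrite mem_enum.
by move=> _; apply: H.
Qed.
End Generic.

Section Main.
Variables (C Pr : finType) (ar : Pr -> nat) (Pi : program C ar).

Local Notation gi := (ginst Pi).
Local Notation ta := (tatom Pi).
Local Notation rr := (@ginst_rule C Pr ar Pi).

Definition proj (K : {set ta}) : {set gatom C ar} := [set a | inl a \in K].

Lemma proj_phi I : proj (phi Pi I) = I.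
Proof. by apply/setP => a; rewrite !inE. Qed.

Lemma phi_inr I g : (inr g \in phi Pi I) = ~~ sat_rule I (rr g).
Proof. by rewrite inE. Qed.

Lemma all_tr (Q : pred (grule ta)) : all Q (tr_rules Pi) = all (fun g => all Q (tr_inst g)) (enum gi).
Proof.
rewrite /tr_rules; elim: (enum gi) => // g s IH; rewrite map_cons.
have -> : forall (x : seq (grule ta)) y, flatten (x :: y) = x ++ flatten y by [].
by rewrite all_cat IH.
Qed.

Lemma allinl (K : {set ta}) (s : seq (gatom C ar)) :
  all (fun x => x \in K) (map inl s) = all (fun a => a \in proj K) s.
Proof. by rewrite all_map; apply: eq_all => a; rewrite /= inE. Qed.
Lemma allninl (K : {set ta}) (s : seq (gatom C ar)) :
  all (fun x => x \notin K) (map inl s) = all (fun a => a \notin proj K) s.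
Proof. by rewrite all_map; apply: eq_all => a; rewrite /= inE. Qed.
Lemma hasinl (K : {set ta}) (s : seq (gatom C ar)) :
  has (fun x => x \in K) (map inl s) = has (fun a => a \in proj K) s.
Proof. by rewrite has_map; apply: eq_has => a; rewrite /= inE. Qed.
Lemma allnot (K : {set gatom C ar}) s :
  all (fun a => a \notin K) s = ~~ has (fun a => a \in K) s.
Proof. by rewrite -all_predC. Qed.

Lemma tr_model K J :
  is_model (reduct (tr_rules Pi) K) J <-> forall g,
  (bneg (proj K) (rr g) && ~~ hsat (proj K) (rr g) && bpos (proj J) (rr g) ==> (inr g \in J)) &&
  (bneg (proj K) (rr g) && (inr g \notin K) && bpos (proj J) (rr g) ==> hsat (proj J) (rr g)).
Proof.
rewrite is_model_reduct all_tr.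
have E : forall g, all (fun r => bneg K r ==> (bpos J r ==> hsat J r)) (tr_inst g) =
  (bneg (proj K) (rr g) && ~~ hsat (proj K) (rr g) && bpos (proj J) (rr g) ==> (inr g \in J)) &&
  (bneg (proj K) (rr g) && (inr g \notin K) && bpos (proj J) (rr g) ==> hsat (proj J) (rr g)).
  move=> g; rewrite /tr_inst; cbv zeta; move: (rr g) => r.
  rewrite /= /bneg /bpos /hsat /= !all_cat /= !allinl !allninl !hasinl !allnot orbF !andbT.
  by case: (has (in_mem^~ (mem (proj K))) (gneg r)); case: (has (in_mem^~ (mem (proj K))) (ghead r)); case: (has (in_mem^~ (mem (proj J))) (ghead r)); case: (all _ _); case: (_ \in J); case: (_ \in K).
split.
  by move=> /all_enumP H g; rewrite -E.
by move=> H; apply/all_enumP => g; rewrite E.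
Qed.

Lemma PI_eq I : [seq wr.2 | wr <- Gr Pi & sat_rule I wr.2] =
  [seq rr g | g <- enum gi & sat_rule I (rr g)].
Proof. by rewrite /Gr filter_map -map_comp. Qed.

Lemma PI_model I K J : is_model (reduct [seq wr.2 | wr <- Gr Pi & sat_rule I wr.2] K) J <->
  forall g, sat_rule I (rr g) -> bneg K (rr g) -> bpos J (rr g) -> hsat J (rr g).
Proof.
rewrite PI_eq is_model_reduct all_map all_filter; split.
  move=> /all_enumP H g s n p; have := H g; rewrite /= s n p; exact.
move=> H; apply/all_enumP => g /=; apply/implyP => s; apply/implyP => n; apply/implyP => p.
exact: H.
Qed.

Lemma SM_E I : I \in SM Pi =
  stable [seq wr.2 | wr <- Gr Pi & sat_rule I wr.2] I.
Proof. by rewrite inE. Qed.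

Lemma fwd I : I \in SM Pi -> stable (tr_rules Pi) (phi Pi I).
Proof.
rewrite SM_E => /andP [_ /forallP Hmin].
have Hmod : is_model (reduct (tr_rules Pi) (phi Pi I)) (phi Pi I).
  apply/tr_model => g; rewrite !proj_phi phi_inr negbK sat_ruleE.
  by case: (bpos _ _); case: (bneg _ _); case: (hsat _ _).
apply/andP; split => //; apply/forallP => J; apply/implyP => HJ; apply/negP => /tr_model HM.
move/properP: (HJ) => [sJ [x xK xJ]].
have sJ1 : proj J \subset I.
  by apply/subsetP => a; rewrite inE => /(subsetP sJ); rewrite inE.
have [eJ|nJ] := eqVneq (proj J) I.
  case: x xK xJ => [a|g].
    by rewrite inE => aI; rewrite -eJ inE in aI => /negP.
  rewrite phi_inr sat_ruleE negb_imply => /andP [/andP [p n] h] /negP; apply.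
  have := HM g; rewrite proj_phi eJ p n h /= => /andP [] //.
have pJ : proj J \proper I by rewrite properEneq nJ sJ1.
have := Hmin (proj J); rewrite pJ /= => /negP; apply.
apply/PI_model => g s n p; have := HM g; rewrite proj_phi phi_inr s n p /= andbT.
by move=> /andP [].
Qed.

Lemma phi_inj : {in SM Pi &, injective (phi Pi)}.
Proof. by move=> I I' _ _ E; rewrite -(proj_phi I) E proj_phi. Qed.

Lemma onto J : stable (tr_rules Pi) J -> exists2 I, I \in SM Pi & phi Pi I = J.
Proof.
move=> /andP [HM /forallP Hmin].
have HM' := iffLR (tr_model J J) HM.
have phiJ : phi Pi (proj J) = J.
  apply/setP => [[a|g]]; first by rewrite !inE.
  rewrite phi_inr; apply/idP/idP.
    rewrite sat_ruleE negb_imply => /andP [/andP [p n] h].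
    by have := HM' g; rewrite p n h /= => /andP [].
  move=> gJ; apply/negP => sg.
  have := Hmin (J :\ inr g); rewrite properD1 //= => /negP; apply.
  have pE : proj (J :\ inr g) = proj J by apply/setP => a; rewrite !inE.
  apply/tr_model => g'; rewrite pE; have := HM' g'.
  have [->|ne] := eqVneq g' g.
    move: sg; rewrite sat_ruleE.
    by case: (bpos _ _); case: (bneg _ _); case: (hsat _ _); rewrite /= ?andbF ?gJ.
  by rewrite !inE; have -> : (inr g' != inr g :> ta) by apply: contra ne => /eqP [->].
exists (proj J) => //.
rewrite SM_E; apply/andP; split.
  apply/PI_model => g; rewrite sat_ruleE => /implyP H n p; apply: H; by rewrite p n.
apply/forallP => J1; apply/implyP => pJ1; apply/negP => /PI_model HJ1.
move/properP: (pJ1) => [sJ1 [a aI aJ1]].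
pose J' := [set x : ta | match x with inl a => a \in J1 | inr g => inr g \in J end].
have pJ1E : proj J' = J1 by apply/setP => b; rewrite !inE.
have : J' \proper J.
  apply/properP; split.
    apply/subsetP => [[b|g]]; rewrite inE //.
    by move=> /(subsetP sJ1); rewrite inE.
  by exists (inl a); [rewrite inE in aI | rewrite inE].
move=> pJ'; have := Hmin J'; rewrite pJ' /= => /negP; apply.
apply/tr_model => g; rewrite pJ1E; apply/andP; split.
  apply/implyP => /andP [/andP [n h] p]; rewrite inE -phiJ phi_inr sat_ruleE.
  by rewrite (bpos_sub sJ1 p) n (negbTE h).
apply/implyP => /andP [/andP [n u] p].
apply: HJ1 => //; move: u; by rewrite -{1}phiJ phi_inr negbK.
Qed.
End Main.

Local Open Scope R_scope.
Definition isHard (w : weight) : bool := if w is Hard then true else false.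
Definition softv (w : weight) : R := if w is Soft r then r else 0.

Lemma sumR_cons x s : sumR (x :: s) = (x + sumR s).
Proof. by []. Qed.

Lemma INR_bool (b : bool) n : INR (b + n) = (if b then 1 else 0) + INR n.
Proof. by case: b; rewrite ?add0n ?add1n ?S_INR /=; ring. Qed.

Lemma wsum (X : Type) (w : X -> weight) (P : pred X) a s :
  sumR [seq wval a (w x) | x <- s & P x] =
  (a * INR (count (fun x => isHard (w x) && P x) s) +
   sumR [seq softv (w x) | x <- s & ~~ isHard (w x) && P x]).
Proof.
elim: s => [|x s IH]; first by rewrite /=; simpl; ring.
rewrite [filter _ (_ :: _)]/= [count _ (_ :: _)]/= [filter (fun _ => _ && _) (_ :: _)]/=.
rewrite INR_bool.
case: (P x) => /=; case Ew: (w x) => [r|]; rewrite ?Ew /= ?sumR_cons IH ?Ew /=; ring.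
Qed.

Lemma sumR_scale (X : Type) (f : X -> R) k s :
  sumR [seq (k * f x) | x <- s] = (k * sumR [seq f x | x <- s]).
Proof. elim: s => [|x s IH]; first by simpl; ring. by rewrite !map_cons !sumR_cons IH; cbv beta; ring. Qed.

Lemma sumR_ge0 (X : eqType) (f : X -> R) s :
  (forall x, x \in s -> 0 <= f x) -> (0 <= sumR [seq f x | x <- s]).
Proof.
elim: s => [|y s IH] H; first by simpl; lra.
rewrite map_cons sumR_cons.
have Hy : 0 <= f y by apply: H; rewrite inE eqxx.
have : 0 <= sumR [seq f x | x <- s] by apply: IH => z zs; apply: H; rewrite inE zs orbT.
lra.
Qed.

Lemma sumR_ge (X : eqType) (f : X -> R) s x0 :
  (forall x, x \in s -> 0 <= f x) -> x0 \in s -> (f x0 <= sumR [seq f x | x <- s]).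
Proof.
elim: s => [|x s IH] H //; rewrite inE map_cons sumR_cons => /orP [/eqP ->|xs].
  have : 0 <= sumR [seq f x | x <- s] by apply: sumR_ge0 => z zs; apply: H; rewrite inE zs orbT.
  lra.
have Hx : 0 <= f x by apply: H; rewrite inE eqxx.
have : f x0 <= sumR [seq f x | x <- s] by apply: IH => // z zs; apply: H; rewrite inE zs orbT.
lra.
Qed.

Lemma lim_iff f l : lim_infty f l <-> is_lim f p_infty (Rbar.Finite l).
Proof.
rewrite -is_lim_spec /=; split.
  by move=> H eps; apply: H; apply: cond_pos.
by move=> H eps Heps; apply: (H (mkposreal eps Heps)).
Qed.

Lemma lim_uniq f p q : lim_infty f p -> lim_infty f q -> p = q.
Proof.
move=> /lim_iff /is_lim_unique Hp /lim_iff /is_lim_unique Hq.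
by rewrite Hp in Hq; case: Hq.
Qed.

Lemma exp_decay c d : (0 < c) -> is_lim (fun a => exp (- (a * c + d))) p_infty (Rbar.Finite 0).
Proof.
move=> Hc; apply/lim_iff => eps Heps.
exists ((- ln eps - d) / c) => a Ha.
rewrite Rminus_0_r Rabs_pos_eq; last by apply: Rlt_le; apply: exp_pos.
rewrite -(exp_ln eps Heps); apply: exp_increasing.
have : ((- ln eps - d) / c * c < a * c) by apply: Rmult_lt_compat_r.
have -> : ((- ln eps - d) / c * c = - ln eps - d) by field; lra.
lra.
Qed.

Lemma is_lim_sumR (X : eqType) (F : X -> R -> R) (L : X -> R) s :
  (forall x, x \in s -> is_lim (F x) p_infty (Rbar.Finite (L x))) ->
  is_lim (fun a => sumR [seq F x a | x <- s]) p_infty (Rbar.Finite (sumR [seq L x | x <- s])).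
Proof.
elim: s => [|x s IH] H /=.
  exact: is_lim_const.
have Hx : is_lim (F x) p_infty (Rbar.Finite (L x)) by apply: H; rewrite inE eqxx.
have Hs := IH (fun z zs => H z ltac:(by rewrite inE zs orbT)).
exact: (is_lim_plus' (F x) (fun a => sumR [seq F x a | x <- s]) p_infty _ _ Hx Hs).
Qed.

Lemma filter_consE (T : Type) (p : pred T) x xs :
  filter p (x :: xs) = if p x then x :: filter p xs else filter p xs.
Proof. by []. Qed.

Lemma sumR_split (X : Type) (f : X -> R) (P : pred X) s :
  sumR [seq f x | x <- s & P x] + sumR [seq f x | x <- s & ~~ P x] = sumR [seq f x | x <- s].
Proof.
elim: s => [|x s IH]; first by rewrite /=; simpl; ring.
rewrite !filter_consE; cbv beta; case: (P x) => /=; rewrite -IH; ring.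
Qed.

Section Num.
Variables (C Pr : finType) (ar : Pr -> nat) (Pi : program C ar).

Local Notation gi := (ginst Pi).
Local Notation ta := (tatom Pi).
Local Notation rr := (@ginst_rule C Pr ar Pi).
Local Notation wg := (@ginst_weight C Pr ar Pi).

Definition hv (K : {set ta}) : nat := count (fun g => isHard (wg g) && (inr g \in K)) (enum gi).
Definition svv (K : {set ta}) : R :=
  sumR [seq softv (wg g) | g <- enum gi & ~~ isHard (wg g) && (inr g \in K)].

Lemma GrE a (P : pred (grule (gatom C ar))) :
  [seq wval a wr.1 | wr <- Gr Pi & P wr.2] = [seq wval a (wg g) | g <- enum gi & P (rr g)].
Proof. by rewrite /Gr filter_map -map_comp. Qed.

Lemma unsatE a K : unsat_sum a K = (a * INR (hv K) + svv K).
Proof. by rewrite /unsat_sum wsum. Qed.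

Lemma WpntE I a : I \in SM Pi -> Wpnt Pi a I = exp (- unsat_sum a (phi Pi I)).
Proof.
move=> HI; rewrite /Wpnt HI (GrE a (fun r => ~~ sat_rule I r)) /unsat_sum.
have -> : [seq g <- enum gi | inr g \in phi Pi I] = [seq g <- enum gi | ~~ sat_rule I (rr g)].
  by apply: eq_filter => g; rewrite phi_inr.
by [].
Qed.

Lemma count_consE (T : Type) (p : pred T) x xs : count p (x :: xs) = (p x + count p xs)%N.
Proof. by []. Qed.

Lemma tr_wcE K l g : (wlvl (tr_wc g) == l) && wc_sat K (tr_wc g) =
  (if isHard (wg g) then l == 1%N else l == 0%N) && (inr g \in K).
Proof. by rewrite /tr_wc /wc_sat; case: (wg g) => [r|] /=; rewrite !andbT eq_sym. Qed.

Lemma tr_wwt g : wwt (tr_wc g) = if isHard (wg g) then 1 else softv (wg g).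
Proof. by rewrite /tr_wc; case: (wg g). Qed.

Lemma pen_gen K l s :
  sumR [seq wwt c | c <- [seq tr_wc g | g <- s] & (wlvl c == l) && wc_sat K c] =
  if l == 0%N then sumR [seq softv (wg g) | g <- s & ~~ isHard (wg g) && (inr g \in K)]
  else if l == 1%N then INR (count (fun g => isHard (wg g) && (inr g \in K)) s) else 0.
Proof.
elim: s => [|g s IH]; first by case: l => [|[|l]].
rewrite map_cons !filter_consE count_consE INR_bool tr_wcE.
have Hw := tr_wwt g.
case: (isHard (wg g)) Hw => Hw; case: (inr g \in K); rewrite ?andbF ?andbT;
  case: l IH => [|[|l]] IH; rewrite ?map_cons ?sumR_cons ?Hw IH /=; try ring.
Qed.

Lemma penE K l : penalty (tr_weak Pi) K l =
  if l == 0%N then svv K else if l == 1%N then INR (hv K) else 0.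
Proof. exact: pen_gen. Qed.

Definition H I := hv (phi Pi I).
Definition S I := svv (phi Pi I).

Definition dom I I' := (H I' < H I)%N \/ (H I' = H I /\ (S I' < S I)).

Lemma dominatedE I I' : dominated (tr_weak Pi) (phi Pi I) (phi Pi I') <-> dom I I'.
Proof.
rewrite /dom /H /S; split.
  case=> [[|[|l]] [Hl Hk]]; rewrite !penE /= in Hl.
  - right; split => //; have := Hk 1%N isT; rewrite !penE /=; exact: INR_eq.
  - by left; apply/ltP; apply: INR_lt.
  - lra.
case=> [Hlt|[He Hs]].
  exists 1%N; rewrite !penE /=; split; first by apply: lt_INR; apply/ltP.
  by case=> [|[|k]] //; rewrite !penE.
exists 0%N; rewrite !penE /=; split => //.
by case=> [|[|k]] // _; rewrite !penE ?He.
Qed.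

Lemma optimalE I : I \in SM Pi ->
  optimal (tr_rules Pi) (tr_weak Pi) (phi Pi I) <-> ~ exists2 I', I' \in SM Pi & dom I I'.
Proof.
move=> HI; split.
  move=> [_ Hn] [I' HI' Hd]; apply: Hn; exists (phi Pi I'); split; first exact: fwd.
  exact/dominatedE.
move=> Hn; split; first exact: fwd.
move=> [K' [sK' Hd]]; have [I' HI' eI'] := onto sK'.
apply: Hn; exists I' => //; apply/dominatedE; by rewrite eI'.
Qed.

Lemma WstdE a I : Wstd Pi a I =
  if I \in SM Pi then exp (sumR [seq wval a (wg g) | g <- enum gi] - (a * INR (H I) + S I))
  else 0.
Proof.
rewrite /Wstd; case: (I \in SM Pi) => //; congr exp.
rewrite GrE /H /S -unsatE /unsat_sum.
have -> : [seq wval a (wg g) | g <- enum gi & inr g \in phi Pi I] =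
          [seq wval a (wg g) | g <- enum gi & ~~ sat_rule I (rr g)].
  by congr map; apply: eq_filter => g; rewrite phi_inr.
have E := sumR_split (fun g => wval a (wg g)) (fun g => sat_rule I (rr g)) (enum gi).
cbv beta in E; lra.
Qed.

End Num.

Lemma exp_le_mono x y : x <= y -> exp x <= exp y.
Proof. move=> H; case: (Rle_lt_or_eq_dec x y H) => [h|->]; [left; exact: exp_increasing | right; done]. Qed.

Lemma exp_le_inv x y : exp x <= exp y -> x <= y.
Proof. move=> H; apply: Rnot_lt_le => h; have := exp_increasing _ _ h; lra. Qed.

Section Lim.
Variables (C Pr : finType) (ar : Pr -> nat) (Pi : program C ar).
Variables (I0 : {set gatom C ar}) (hI0 : I0 \in SM Pi)
          (hmin : forall J, J \in SM Pi -> (H Pi I0 <= H Pi J)%N).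

Local Notation gi := (ginst Pi).
Local Notation wg := (@ginst_weight C Pr ar Pi).
Local Notation m := (H Pi I0).
Local Notation HH := (H Pi).
Local Notation SS := (S Pi).
Local Notation SMl := [seq J <- enum {set gatom C ar} | J \in SM Pi].

Definition E J a := exp (- (a * (INR (HH J) - INR m) + SS J)).
Definition L J := if HH J == m then exp (- SS J) else 0.
Definition Zs := sumR [seq L J | J <- SMl].
Definition D a := sumR [seq E J a | J <- SMl].
Definition fp I := if I \in SM Pi then L I / Zs else 0.

Lemma I0_in : I0 \in SMl.
Proof. by rewrite mem_filter hI0 mem_enum. Qed.

Lemma L_ge0 J : 0 <= L J.
Proof. rewrite /L; case: (_ == _); [left; exact: exp_pos | right; done]. Qed.

Lemma Zs_pos : 0 < Zs.
Proof.
have H1 : L I0 <= Zs by apply: sumR_ge; [move=> x _; exact: L_ge0 | exact: I0_in].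
have : 0 < L I0 by rewrite /L eqxx; exact: exp_pos.
lra.
Qed.

Lemma D_pos a : 0 < D a.
Proof.
have H1 : E I0 a <= D a.
  rewrite /D; apply: (@sumR_ge _ (fun J => E J a) SMl I0); last exact: I0_in.
  move=> x _; left; exact: exp_pos.
have := exp_pos (- (a * (INR m - INR m) + SS I0)); rewrite /E in H1; lra.
Qed.

Lemma ratio I a : I \in SM Pi -> Wstd Pi a I / Zstd Pi a = E I a / D a.
Proof.
move=> HI.
set Kf := exp (sumR [seq wval a (wg g) | g <- enum gi] - a * INR m).
have WE : forall J, J \in SM Pi -> Wstd Pi a J = Kf * E J a.
  move=> J HJ; rewrite WstdE HJ /Kf /E -exp_plus; congr exp; ring.
have ZE : Zstd Pi a = Kf * D a.
  rewrite /Zstd /D -sumR_scale; congr sumR; apply/eq_in_map => J.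
  by rewrite mem_filter => /andP [HJ _]; apply: WE.
rewrite WE // ZE; have := D_pos a; have : 0 < Kf by exact: exp_pos.
move=> h1 h2; field; lra.
Qed.

Lemma lim_E J : J \in SM Pi -> is_lim (E J) p_infty (Rbar.Finite (L J)).
Proof.
move=> HJ; rewrite /L; case: eqP => He.
  apply: (is_lim_ext (fun _ => exp (- SS J))); last exact: is_lim_const.
  by move=> a; rewrite /E He; congr exp; ring.
have lt : (m < HH J)%N by rewrite ltn_neqAle hmin // andbT; apply/eqP => h; apply: He.
have c0 : 0 < INR (HH J) - INR m by have := lt_INR _ _ (ltP lt); lra.
apply: (is_lim_ext _ _ _ _ _ (exp_decay (SS J) c0)) => a. by rewrite /E.
Qed.

Lemma prob_f I : prob Pi I (fp I).
Proof.
apply/lim_iff; rewrite /fp; case HI: (I \in SM Pi).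
  apply: (is_lim_ext (fun a => E I a / D a)); first by move=> a; rewrite ratio.
  have HD : is_lim D p_infty (Rbar.Finite Zs).
    apply: is_lim_sumR => J; rewrite mem_filter => /andP [HJ _]; exact: lim_E.
  have := is_lim_div (E I) D p_infty (Rbar.Finite (L I)) (Rbar.Finite Zs) (lim_E HI) HD.
  apply.
    by move=> [] h; have := Zs_pos; lra.
  by [].
apply: (is_lim_ext (fun _ => 0)); last exact: is_lim_const.
by move=> a; rewrite WstdE HI /Rdiv Rmult_0_l.
Qed.

Definition Best (I : {set gatom C ar}) := I \in SM Pi /\ HH I = m /\
  (forall J, J \in SM Pi -> HH J = m -> SS I <= SS J).

Lemma fp_ge0 J : 0 <= fp J.
Proof.
rewrite /fp; case: (_ \in _); last by right.
have := L_ge0 J; have := Zs_pos => h1 h2.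
rewrite /Rdiv; apply: Rmult_le_pos => //; left; exact: Rinv_0_lt_compat.
Qed.

Lemma fp_best J : J \in SM Pi -> HH J = m -> fp J = exp (- SS J) / Zs.
Proof. by move=> HJ He; rewrite /fp HJ /L He eqxx. Qed.

Lemma div_le x y : x <= y -> x / Zs <= y / Zs.
Proof. move=> h; rewrite /Rdiv; apply: Rmult_le_compat_r => //; left; apply: Rinv_0_lt_compat; exact: Zs_pos. Qed.

Lemma div_le_inv x y : x / Zs <= y / Zs -> x <= y.
Proof.
move=> h; apply: (Rmult_le_reg_r (/ Zs)); first by apply: Rinv_0_lt_compat; exact: Zs_pos.
exact: h.
Qed.

Lemma mp_best I : most_probable Pi I <-> Best I.
Proof.
split.
  move=> [HI [p [Hp Hmax]]].
  have ep : p = fp I := lim_uniq Hp (prob_f I).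
  have h0 : fp I0 <= p := Hmax I0 (fp I0) (prob_f I0).
  have h0' : 0 < fp I0 by rewrite (fp_best hI0 erefl) /Rdiv; apply: Rmult_lt_0_compat;
     [exact: exp_pos | apply: Rinv_0_lt_compat; exact: Zs_pos].
  have eH : HH I = m.
    apply/eqP; apply/negP => /negP ne.
    have : fp I = 0 by rewrite /fp HI /L (negbTE ne) /Rdiv Rmult_0_l.
    lra.
  split => //; split => // J HJ HJm.
  have := Hmax J (fp J) (prob_f J).
  rewrite ep (fp_best HJ HJm) (fp_best HI eH) => /div_le_inv /exp_le_inv; lra.
move=> [HI [eH Hs]]; split => //; exists (fp I); split; first exact: prob_f.
move=> J q Hq; rewrite (lim_uniq Hq (prob_f J)) (fp_best HI eH).
rewrite /fp; case HJ: (J \in SM Pi); last first.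
  rewrite /Rdiv; apply: Rmult_le_pos; first by left; exact: exp_pos.
  left; apply: Rinv_0_lt_compat; exact: Zs_pos.
rewrite /L; case: eqP => HJm.
  apply: div_le; apply: exp_le_mono; have := Hs J HJ HJm; lra.
rewrite /Rdiv Rmult_0_l; apply: Rmult_le_pos; first by left; exact: exp_pos.
left; apply: Rinv_0_lt_compat; exact: Zs_pos.
Qed.

Lemma opt_best I : I \in SM Pi -> (~ exists2 I', I' \in SM Pi & dom Pi I I') <-> Best I.
Proof.
move=> HI; split.
  move=> Hn.
  have eH : HH I = m.
    apply/eqP; rewrite eqn_leq hmin // andbT leqNgt; apply/negP => lt.
    by apply: Hn; exists I0 => //; left.
  split => //; split => // J HJ HJm.
  apply: Rnot_lt_le => lt; apply: Hn; exists J => //; right; split => //; by rewrite HJm eH.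
move=> [_ [eH Hs]] [I' HI' [lt|[e lt]]].
  by have := hmin HI'; rewrite leqNgt -eH lt.
have := Hs I' HI'; rewrite e eH => /(_ erefl); lra.
Qed.

End Lim.

Lemma get_min (C Pr : finType) (ar : Pr -> nat) (Pi : program C ar) I : I \in SM Pi ->
  exists I0, I0 \in SM Pi /\ forall J, J \in SM Pi -> (H Pi I0 <= H Pi J)%N.
Proof.
move=> HI; case: (arg_minnP (H Pi) HI) => I0 H0 Hm; exists I0; split => //.
Qed.

Theorem theorem3 (C Pr : finType) (ar : Pr -> nat) (Pi : program C ar) :
  (* phi maps SM[Pi] into the stable models of lpmln2asp^pnt(Pi) ... *)
  (forall I, I \in SM Pi -> stable (tr_rules Pi) (phi Pi I)) /\
  (* ... injectively ... *)
  {in SM Pi &, injective (phi Pi)} /\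
  (* ... and onto *)
  (forall J, stable (tr_rules Pi) J -> exists2 I, I \in SM Pi & phi Pi I = J) /\
  (* the penalty-based weight formula (alpha kept symbolic: any value a) *)
  (forall I, I \in SM Pi -> forall a : R,
     Wpnt Pi a I = exp (- unsat_sum a (phi Pi I))) /\
  (* phi restricts to a correspondence: most probable -> optimal ... *)
  (forall I, most_probable Pi I -> optimal (tr_rules Pi) (tr_weak Pi) (phi Pi I)) /\
  (* ... and onto the optimal stable models *)
  (forall J, optimal (tr_rules Pi) (tr_weak Pi) J ->
     exists2 I, most_probable Pi I & phi Pi I = J).
Proof.
split; first exact: fwd.
split; first exact: phi_inj.
split; first exact: onto.
split; first by move=> I HI a; exact: WpntE.
split.
  move=> I Hmp; have HI : I \in SM Pi by case: Hmp.
  have [I0 [hI0 hmin]] := get_min HI.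
  apply/(optimalE HI)/(opt_best hI0 hmin HI)/(mp_best hI0 hmin); exact: Hmp.
move=> J Hopt; have [I HI eI] := onto (proj1 Hopt).
exists I => //.
have [I0 [hI0 hmin]] := get_min HI.
apply/(mp_best hI0 hmin)/(opt_best hI0 hmin HI)/(optimalE HI); by rewrite eI.
Qed.
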